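(* Let $p$ be a monic polynomial of degree $d$, let $\alpha\in\mathbb{C}$, and set $\tilde p(Z)=(Z-\alpha)p(Z)$. (1) For a point $\underline z=(z_1,\dots,z_d,\alpha)\in\mathbb{C}^{d+1}$ with pairwise distinct entries, the Jacobi matrix of $W_{\tilde p}$ at $\underline z$ has the block form $$DW_{\tilde p}(\underline z)=\begin{pmatrix} DW_p(\underline z') & *\\ 0_{1\times d} & \lambda\end{pmatrix},$$ where $\underline z'=(z_1,\dots,z_d)$, $*$ is some $d\times1$ column, and $\lambda=1-\dfrac{p(\alpha)}{\prod_{j=1}^d(\alpha-z_j)}$. (2) If $q\in\mathbb{C}^d$ is a periodic point of $W_p$ of period $n$ such that all eigenvalues of $D(W_p^{\circ n})(q)$ have absolute value strictly less than $1$, then for all $\alpha$ with $|\alpha|$ sufficiently large, $\tilde q=(q,\alpha)\in\mathbb{C}^{d+1}$ is a periodic point of $W_{\tilde p}$ of period $n$ and all eigenvalues of $D(W_{\tilde p}^{\circ n})(\tilde q)$ have absolute value strictly less than $1$.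
   Context: For a monic polynomial $p\in\mathbb{C}[Z]$ of degree $d$, the Weierstrass map $W_p$ is the partially defined map $\mathbb{C}^d\setminus\Delta\to\mathbb{C}^d$, $\underline z\mapsto \underline z'$ with $z'_k=z_k-\dfrac{p(z_k)}{\prod_{j\ne k}(z_k-z_j)}$, where $\Delta=\{\underline z\in\mathbb{C}^d: z_j=z_k\text{ for some }j<k\}$. *)

(* Defs.v *)
From mathcomp Require Import all_boot all_order all_algebra.
From mathcomp Require Import complex.
From mathcomp Require Import all_classical all_reals all_analysis.
Import numFieldNormedType.Exports.
Set Implicit Arguments. Unset Strict Implicit. Unset Printing Implicit Defensive.
Import Order.TTheory GRing.Theory Num.Theory.
Local Open Scope ring_scope.

Definition offDiag (K : eqType) (d : nat) (z : 'rV[K]_d) : Prop :=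
  forall j k : 'I_d, j != k -> z 0 j != z 0 k.

(* It is only meaningful off
   Delta; off Delta all denominators are non-zero.  On Delta MathComp's
   convention x / 0 = 0 makes it total, but we never use those values. *)
Definition weierstrass (K : fieldType) (p : {poly K}) (d : nat)
    (z : 'rV[K]_d) : 'rV[K]_d :=
  \row_(k < d) (z 0 k - p.[z 0 k] / \prod_(j < d | j != k) (z 0 k - z 0 j)).

(* Jacobi matrix in the usual convention: entry (i, j) = d f_i / d z_j.
   The library's 'J f z (= lin1_mx ('d f z)) acts on row vectors,
   i.e. is the transpose of the usual Jacobi matrix. *)
Definition jacobi (K : numFieldType) (n : nat) (f : 'rV[K]_n -> 'rV[K]_n)
    (z : 'rV[K]_n) : 'M[K]_n :=
  ('J f z)^T.

(* q is a periodic point of (the partial map) W of (exact, minimal) period n: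
   the orbit q, W q, ..., W^(n-1) q stays off Delta (so the iterates are
   defined), W^n q = q and W^k q <> q for 0 < k < n. *)
Definition periodic_point (K : eqType) (d : nat) (W : 'rV[K]_d -> 'rV[K]_d)
    (q : 'rV[K]_d) (n : nat) : Prop :=
  [/\ (0 < n)%N,
      forall k, (k < n)%N -> offDiag (iter k W q),
      iter n W q = q &
      forall k, (0 < k < n)%N -> iter k W q != q].

Definition attracting (K : numFieldType) (n : nat) (M : 'M[K]_n) : Prop :=
  forall a : K, eigenvalue M a -> `|a| < 1.

(* Main.v *)
Require Import Defs.
From mathcomp Require Import all_boot all_order all_algebra.
From mathcomp Require Import complex.
From mathcomp Require Import all_classical all_reals all_analysis.
Import numFieldNormedType.Exports.
Import Order.TTheory GRing.Theory Num.Theory.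
Local Open Scope ring_scope.
Local Open Scope complex_scope.
From mathcomp Require Import ring.

Section Diff.
Variable K : numFieldType.
Variable V : normedModType K.

Lemma diff_prod_seq (I : Type) (s : seq I) (P : pred I) (g : I -> V -> K) x :
  (forall i, P i -> differentiable (g i) x) ->
  differentiable (fun y => \prod_(i <- s | P i) g i y) x.
Proof.
move=> H; elim: s => [|a s IH].
  under eq_fun do rewrite big_nil. exact: differentiable_cst.
under eq_fun do rewrite big_cons.
case: (boolP (P a)) => Pa.
  have -> : (fun y => g a y * \prod_(j <- s | P j) g j y) = g a * (fun y => \prod_(j <- s | P j) g j y) by [].
  exact: differentiableM (H a Pa) IH.
exact: IH.
Qed.

Lemma diff_sum_seq (I : Type) (s : seq I) (P : pred I) (W : normedModType K) (g : I -> V -> W) x :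
  (forall i, P i -> differentiable (g i) x) ->
  differentiable (fun y => \sum_(i <- s | P i) g i y) x.
Proof.
move=> H; elim: s => [|a s IH].
  under eq_fun do rewrite big_nil. exact: differentiable_cst.
under eq_fun do rewrite big_cons.
case: (boolP (P a)) => Pa.
  have -> : (fun y => g a y + \sum_(j <- s | P j) g j y) = g a + (fun y => \sum_(j <- s | P j) g j y) by [].
  exact: differentiableD (H a Pa) IH.
exact: IH.
Qed.

Lemma diff_horner (p : {poly K}) (f : V -> K) x :
  differentiable f x -> differentiable (fun y => p.[f y]) x.
Proof.
move=> df; elim/poly_ind: p => [|p c IH].
  under eq_fun do rewrite horner0. exact: differentiable_cst.
under eq_fun do rewrite hornerMXaddC.
have -> : (fun y => p.[f y] * f y + c) = ((fun y => p.[f y]) * f) + cst c by [].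
apply: differentiableD; last exact: differentiable_cst.
exact: differentiableM.
Qed.


Lemma diff_row n (F : 'I_n -> V -> K) x :
  (forall k, differentiable (F k) x) ->
  differentiable (fun y => \row_k F k y : 'rV[K]_n) x.
Proof.
move=> H.
pose g := fun (k : 'I_n) (y : V) => F k y *: (delta_mx 0 k : 'rV[K]_n).
have -> : (fun y => \row_k F k y : 'rV[K]_n) =
   (fun y => \sum_(k <- index_enum 'I_n | true) g k y).
  apply: funext => y; rewrite /g; apply/rowP => j; rewrite mxE summxE /= (bigD1 j) //= !mxE !eqxx /= mulr_natr mulr1n.
  rewrite big1 ?addr0 // => i /negPf ij; rewrite !mxE eq_sym ij /= mulr_natr mulr0n //.
apply: diff_sum_seq.
move=> k _; exact: differentiableZl.
Qed.

Lemma mx_ext m n (A B : 'M[K]_(m, n)) : (forall v : 'rV[K]_m, v *m A = v *m B) -> A = B.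
Proof.
move=> H; apply/row_matrixP => i; rewrite !rowE; exact: H.
Qed.

Lemma jacobian_comp n m l (g : 'rV[K]_n -> 'rV[K]_m) (f : 'rV[K]_m -> 'rV[K]_l) x :
  differentiable g x -> differentiable f (g x) ->
  'J (f \o g) x = 'J g x *m 'J f (g x).
Proof.
move=> dg df; apply: mx_ext => v.
rewrite -deriveEjacobian; last exact: differentiable_comp.
rewrite mulmxA -deriveEjacobian // -deriveEjacobian //.
rewrite !deriveE //; last exact: differentiable_comp.
by rewrite diff_comp.
Qed.

End Diff.

Lemma diff_weier (K : numFieldType) (p : {poly K}) d (z : 'rV[K]_d) :
  offDiag z -> differentiable (@weierstrass K p d) z.
Proof.
move=> oz; apply: diff_row => k.
have dc : forall j : 'I_d, differentiable (fun y : 'rV[K]_d => y 0 j) z.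
  by move=> j; exact: differentiable_coord.
apply: differentiableB; first exact: dc.
have -> : (fun y : 'rV[K]_d => p.[y 0 k] / \prod_(j < d | j != k) (y 0 k - y 0 j)) =
   (fun y => p.[y 0 k]) * (fun y => (\prod_(j <- index_enum 'I_d | j != k) (y 0 k - y 0 j))^-1) by [].
apply: differentiableM; first exact: diff_horner.
apply: differentiableV.
  apply: diff_prod_seq => j _; exact: differentiableB.
rewrite prodf_seq_neq0; apply/allP => j _; apply/implyP => jk.
by rewrite subr_eq0 oz // eq_sym.
Qed.

Section D2.
Variable K : numFieldType.

Lemma derive_transfer (V1 V2 W : normedModType K) (f : V1 -> W) (g : V2 -> W) a b v w :
  (forall h : K, f (h *: v + a) = g (h *: w + b)) -> 'D_v f a = 'D_w g b.
Proof.
move=> H; have Hab : f a = g b.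
  by have := H 0; rewrite !scale0r !add0r.
rewrite /derive Hab.
suff -> : (fun h : K => h^-1 *: ((f \o shift a) (h *: v) - g b)) =
  (fun h => h^-1 *: ((g \o shift b) (h *: w) - g b)) by [].
by apply: funext => h /=; rewrite H.
Qed.

Lemma derive_coord (V : normedModType K) n (f : V -> 'rV[K]_n) a v i :
  differentiable f a -> ('D_v f a) 0 i = 'D_v (fun y => f y 0 i) a.
Proof.
move=> df.
have dc := @differentiable_coord K 1 n (f a) 0 i.
have dfc : differentiable ((fun N : 'rV[K]_n => N 0 i) \o f) a by exact: differentiable_comp.
rewrite (deriveE _ df).
rewrite (_ : 'D_v (fun y => f y 0 i) a = 'D_v ((fun N : 'rV[K]_n => N 0 i) \o f) a) //.
rewrite (deriveE _ dfc) (diff_comp df dc) /=.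
have @cl : {linear 'rV[K]_n -> K}.
  by exists (fun N : 'M[K]_(_, _) => N 0 i); do 2![eexists]; do ?[constructor];
     rewrite ?mxE// => ? *; rewrite ?mxE//; move=> ?; rewrite !mxE.
have -> : (fun N : 'rV[K]_n => N 0 i) = cl by [].
by rewrite diff_lin //; exact: coord_continuous.
Qed.

Lemma jacobi_entry n (f : 'rV[K]_n -> 'rV[K]_n) a i j :
  differentiable f a ->
  jacobi f a i j = 'D_(delta_mx 0 j) (fun y => f y 0 i) a.
Proof.
move=> df; rewrite /jacobi mxE -derive_coord // deriveEjacobian //.
have := rowE j ('J f a); by move=> <-; rewrite /row [RHS]mxE.
Qed.

End D2.

Section P1.
Variable K : numFieldType.
Variables (p : {poly K}) (d : nat) (a : K).

Local Notation Wt := (@weierstrass K (('X - a%:P) * p) (d + 1)).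
Local Notation W := (@weierstrass K p d).

Lemma prod_split_l (F : 'I_(d+1) -> K) j :
  \prod_(i < d+1 | i != lshift 1 j) F i =
  (\prod_(i < d | i != j) F (lshift 1 i)) * F (rshift d ord0).
Proof.
rewrite big_split_ord big_ord1_cond eq_rlshift /=.
by congr (_ * _); apply: eq_bigl => i; rewrite eq_lshift.
Qed.

Lemma prod_split_r (F : 'I_(d+1) -> K) :
  \prod_(i < d+1 | i != rshift d ord0) F i = \prod_(i < d) F (lshift 1 i).
Proof.
rewrite big_split_ord big_ord1_cond eqxx /= mulr1.
by apply: eq_bigl => i; rewrite eq_lrshift.
Qed.

Lemma rowc_l (y : 'rV[K]_d) (t : K) j : row_mx y (const_mx t : 'rV_1) 0 (lshift 1 j) = y 0 j.
Proof. by rewrite row_mxEl. Qed.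

Lemma rowc_r (y : 'rV[K]_d) (t : K) r : row_mx y (const_mx t : 'rV_1) 0 (rshift d r) = t.
Proof. by rewrite row_mxEr mxE. Qed.

Lemma Wt_l (y : 'rV[K]_d) (t : K) j :
  Wt (row_mx y (const_mx t)) 0 (lshift 1 j) =
  y 0 j - (y 0 j - a) * p.[y 0 j] / ((\prod_(i < d | i != j) (y 0 j - y 0 i)) * (y 0 j - t)).
Proof.
rewrite mxE prod_split_l !rowc_l rowc_r hornerM hornerXsubC.
by under eq_bigr => i _ do rewrite rowc_l.
Qed.

Lemma Wt_r (y : 'rV[K]_d) (t : K) :
  Wt (row_mx y (const_mx t)) 0 (rshift d ord0) =
  t - (t - a) * p.[t] / \prod_(i < d) (t - y 0 i).
Proof.
rewrite mxE prod_split_r !rowc_r hornerM hornerXsubC.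
by under eq_bigr => i _ do rewrite rowc_l.
Qed.

Lemma Wt_iota (y : 'rV[K]_d) :
  (forall j, y 0 j != a) ->
  Wt (row_mx y (const_mx a)) = row_mx (W y) (const_mx a).
Proof.
move=> Hy; apply/rowP => k; case: (split_ordP k) => j ->.
  rewrite Wt_l row_mxEl mxE; congr (_ - _).
  rewrite [_ * (y 0 j - a)]mulrC invfM mulrA [(y 0 j - a) * _]mulrC mulfK //.
  by rewrite subr_eq0.
by rewrite (ord1 j) Wt_r rowc_r subrr mul0r mul0r subr0.
Qed.


Lemma shift_l (y : 'rV[K]_d) (t h : K) j :
  h *: (delta_mx 0 (lshift 1 j) : 'rV[K]_(d+1)) + row_mx y (const_mx t : 'rV_1) =
  row_mx (h *: delta_mx 0 j + y) (const_mx t).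
Proof.
apply/rowP => k; case: (split_ordP k) => k' ->.
  by rewrite !(row_mxEl, row_mxEr, mxE) eq_lshift.
by rewrite !(row_mxEl, row_mxEr, mxE) eq_rlshift /= mulr0 add0r.
Qed.

Lemma shift_r (y : 'rV[K]_d) (t h : K) :
  h *: (delta_mx 0 (rshift d ord0) : 'rV[K]_(d+1)) + row_mx y (const_mx t : 'rV_1) =
  row_mx y (const_mx (h *: (1 : K) + t)).
Proof.
apply/rowP => k; case: (split_ordP k) => k' ->.
  by rewrite !(row_mxEl, row_mxEr, mxE) eq_lrshift /= mulr0 add0r.
rewrite !(row_mxEl, row_mxEr, mxE) (ord1 k') eqxx /=.
have -> : h%:A = h by rewrite /GRing.scale /= mulr1.
have -> : (rshift d (0 : 'I_1) == rshift d ord0) = true by apply/eqP; congr rshift; apply/val_inj.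
by rewrite mulr1.
Qed.

Lemma near_neq (z : 'rV[K]_d) : (forall j, z 0 j != a) ->
  \forall y \near z, forall j : 'I_d, (y : 'rV[K]_d) 0 j != a.
Proof.
move=> za.
have dP : differentiable (fun y : 'rV[K]_d => \prod_(j <- index_enum 'I_d | true) (y 0 j - a)) z.
  apply: diff_prod_seq => j _; apply: differentiableB; first exact: differentiable_coord.
  exact: differentiable_cst.
have Pz : \prod_(j <- index_enum 'I_d | true) (z 0 j - a) != 0.
  by rewrite prodf_seq_neq0; apply/allP => j _; rewrite subr_eq0 za.
have H := cvgr_neq0 _ (differentiable_continuous dP) Pz.
near=> y => j.
have : \prod_(j <- index_enum 'I_d | true) (y 0 j - a) != 0 by near: y; exact: H.
rewrite prodf_seq_neq0 => /allP Hy.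
by have := Hy j (mem_index_enum j); rewrite subr_eq0.
Unshelve. all: by end_near. Qed.

Lemma part1 (z : 'rV[K]_d) :
  offDiag (row_mx z (const_mx a : 'rV_1)) ->
  exists c : 'cV[K]_d,
    jacobi Wt (row_mx z (const_mx a)) =
    block_mx (jacobi W z) c 0 (const_mx (1 - p.[a] / \prod_(j < d) (a - z 0 j))).
Proof.
move=> oD.
have oz : offDiag z.
  by move=> j k jk; have := oD (lshift 1 j) (lshift 1 k); rewrite eq_lshift !rowc_l; apply.
have za : forall j, z 0 j != a.
  by move=> j; have := oD (lshift 1 j) (rshift d ord0); rewrite eq_lrshift rowc_l rowc_r; apply.
have dWt := @diff_weier K (('X - a%:P) * p) (d + 1) _ oD.
have dW := @diff_weier K p d z oz.
have Nz := near_neq z za.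
exists (\col_k (jacobi Wt (row_mx z (const_mx a))) (lshift 1 k) (rshift d ord0)).
apply/matrixP => i j.
case: (split_ordP i) => i' ->; case: (split_ordP j) => j' ->.
- rewrite block_mxEul !jacobi_entry //.
  rewrite (@derive_transfer _ _ _ _ _ (fun y => Wt (row_mx y (const_mx a)) 0 (lshift 1 i')) _ z _ (delta_mx 0 j')); last first.
    by move=> h; rewrite shift_l.
  apply: near_eq_derive; apply: filterS Nz => y Hy.
  by rewrite Wt_iota // row_mxEl.
- by rewrite block_mxEur [RHS]mxE (ord1 j').
- rewrite block_mxEdl [RHS]mxE jacobi_entry //.
  rewrite (@derive_transfer _ _ _ _ _ (fun y => Wt (row_mx y (const_mx a)) 0 (rshift d i')) _ z _ (delta_mx 0 j')); last first.
    by move=> h; rewrite shift_l.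
  rewrite (@near_eq_derive _ _ _ _ (cst a)); first by rewrite derive_cst.
  apply: filterS Nz => y Hy.
  by rewrite Wt_iota // row_mxEr mxE.
- rewrite block_mxEdr [RHS]mxE jacobi_entry // (ord1 i') (ord1 j').
  rewrite (@derive_transfer _ _ _ _ _ (fun t => Wt (row_mx z (const_mx t)) 0 (rshift d ord0)) _ a _ 1); last first.
    by move=> h; rewrite shift_r.
  under eq_fun do rewrite Wt_r.
  pose G := fun t => p.[t] * (\prod_(i <- index_enum 'I_d | true) (t - z 0 i))^-1.
  have dG : differentiable G a.
    apply: differentiableM; first exact: diff_horner.
    apply: differentiableV.
      by apply: diff_prod_seq => k _; apply: differentiableB; [apply: ex_diff|exact: differentiable_cst].
    by rewrite prodf_seq_neq0; apply/allP => k _; rewrite subr_eq0 eq_sym za.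
  have -> : (fun t => t - (t - a) * p.[t] / \prod_(i < d) (t - z 0 i)) = (id - ((id - cst a) * G)).
    by apply: funext => t; rewrite /G /= mulrA.
  have dG' : derivable G a 1 by apply: diff_derivable.
  have dl : derivable (id - cst a) a 1 by apply: derivableB; [exact: derivable_id|exact: derivable_cst].
  rewrite deriveB; [|exact: derivable_id|exact: derivableM].
  rewrite deriveM // deriveB; [|exact: derivable_id|exact: derivable_cst].
  rewrite derive_id derive_cst /=.
  have -> : (id - cst a) a = 0 by apply: subrr.
  rewrite scale0r add0r subr0.
  by rewrite /GRing.scale /= mulr1.
Qed.

End P1.

Section P2.
Variable K : numFieldType.
Variables (p : {poly K}) (d : nat) (a : K).

Local Notation Wt := (@weierstrass K (('X - a%:P) * p) (d + 1)).
Local Notation W := (@weierstrass K p d).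
Local Notation io y := (row_mx y (const_mx a : 'rV[K]_1)).

Lemma jacobi_comp n (g f : 'rV[K]_n -> 'rV[K]_n) x :
  differentiable g x -> differentiable f (g x) ->
  jacobi (f \o g) x = jacobi f (g x) *m jacobi g x.
Proof. by move=> dg df; rewrite /jacobi jacobian_comp // trmx_mul. Qed.

Lemma jacobi_id n (x : 'rV[K]_n) : jacobi (fun y => y) x = 1%:M.
Proof.
rewrite /jacobi; have -> : 'J (fun y : 'rV[K]_n => y) x = 1%:M; last exact: trmx1.
apply: mx_ext => v; rewrite mulmx1 -deriveEjacobian; last exact: ex_diff.
exact: derive_id.
Qed.

Lemma offDiag_io (y : 'rV[K]_d) : offDiag y -> (forall j, y 0 j != a) -> offDiag (io y).
Proof.
move=> oy ya i j; case: (split_ordP i) => i' ->; case: (split_ordP j) => j' ->.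
- by rewrite eq_lshift !rowc_l; exact: oy.
- by rewrite !rowc_l rowc_r => _; exact: (ya i').
- by rewrite rowc_r rowc_l => _; rewrite eq_sym; exact: (ya j').
- by rewrite (ord1 i') (ord1 j') eqxx.
Qed.

Lemma iter_io q n : (forall k, (k < n)%N -> forall j, iter k W q 0 j != a) ->
  forall k, (k <= n)%N -> iter k Wt (io q) = io (iter k W q).
Proof.
move=> H; elim => [|k IH] Hk //=.
rewrite IH ?(ltnW Hk) // Wt_iota //; exact: H.
Qed.

Definition lam (q : 'rV[K]_d) i := 1 - p.[a] / \prod_(j < d) (a - iter i W q 0 j).

Lemma const_mul (x y : K) : (const_mx x : 'M[K]_1) *m (const_mx y : 'M[K]_1) = const_mx (x * y).
Proof. by apply/matrixP => i j; rewrite !mxE big_ord1 !mxE. Qed.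

Lemma jac_iter q n :
  (forall k, (k < n)%N -> offDiag (iter k W q) /\ forall j, iter k W q 0 j != a) ->
  forall k, (k <= n)%N ->
  [/\ differentiable (iter k Wt) (io q), differentiable (iter k W) q &
    exists c, jacobi (iter k Wt) (io q) =
      block_mx (jacobi (iter k W) q) c 0 (const_mx (\prod_(i < k) lam q i))].
Proof.
move=> H; have Hio := @iter_io q n (fun k Hk => (H k Hk).2).
elim => [|k IH] Hk.
  split; [exact: ex_diff|exact: ex_diff|exists 0].
  rewrite /= !jacobi_id big_ord0 (scalar_mx_block d 1); congr block_mx.
  by apply/matrixP => i j; rewrite !mxE (ord1 i) (ord1 j).
have [dt dw [c Hc]] := IH (ltnW Hk).
have [oq qa] := H k Hk.
have dWt : differentiable Wt (iter k Wt (io q)).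
  by rewrite Hio ?(ltnW Hk) //; apply: diff_weier; exact: offDiag_io.
have dW : differentiable W (iter k W q) by exact: diff_weier.
have [c1 Hc1] := @part1 K p d a (iter k W q) (offDiag_io _ oq qa).
split.
- exact: (@differentiable_comp _ _ _ _ (iter k Wt) Wt).
- exact: (@differentiable_comp _ _ _ _ (iter k W) W).
exists (jacobi W (iter k W q) *m c + c1 *m const_mx (\prod_(i < k) lam q i)).
rewrite (_ : iter k.+1 Wt = Wt \o iter k Wt) // jacobi_comp //.
rewrite (_ : iter k.+1 W = W \o iter k W) // jacobi_comp //.
rewrite Hc Hio ?(ltnW Hk) // Hc1 mulmx_block.
rewrite !mul0mx !mulmx0 !add0r !addr0 const_mul big_ord_recr /= mulrC.
by [].
Qed.

End P2.

Lemma eig_block (K : fieldType) d (A : 'M[K]_d) (c : 'cV[K]_d) (l e : K) :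
  eigenvalue (block_mx A c 0 (const_mx l : 'M[K]_1)) e -> eigenvalue A e \/ e = l.
Proof.
move=> /eigenvalueP [v Hv v0].
have Ev : row_mx (lsubmx v) (rsubmx v) = v := hsubmxK v.
move: Hv v0; rewrite -Ev; move: (lsubmx v) (rsubmx v) => v1 v2 {Ev}.
rewrite mul_row_block mulmx0 addr0 scale_row_mx.
move=> Hb v0; have [H1 H2] := eq_row_mx Hb.
case: (eqVneq v1 0) => [v10|v10].
  right; move: v0; rewrite v10 row_mx_eq0 eqxx /= => v20.
  have : v2 0 0 != 0.
    apply: contra v20 => /eqP h; apply/eqP/rowP => j; by rewrite (ord1 j) h mxE.
  move=> h0; move: H2; rewrite v10 mul0mx add0r => /(congr1 (fun M : 'M[K]_1 => M 0 0)).
  rewrite !mxE big_ord1 !mxE.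
  by move=> /eqP; rewrite mulrC -subr_eq0 -mulrBl mulf_eq0 (negPf h0) orbF subr_eq0 => /eqP ->.
by left; apply/eigenvalueP; exists v1.
Qed.

Lemma prod_lt1 (K : numDomainType) n (x : 'I_n -> K) : (0 < n)%N ->
  (forall i, 0 <= x i < 1) -> \prod_(i < n) x i < 1.
Proof.
elim: n x => [//|[|n] IH] x _ Hx.
  by rewrite big_ord1; case/andP: (Hx ord0).
rewrite big_ord_recr /=; apply: mulr_ilt1.
- by apply: prodr_ge0 => i _; case/andP: (Hx (widen_ord (leqnSn _) i)).
- by case/andP: (Hx ord_max).
- by apply: IH => // i; exact: Hx.
- by case/andP: (Hx ord_max).
Qed.

Section P2b.
Variable K : numFieldType.
Variables (p : {poly K}) (d : nat) (a : K).

Local Notation Wt := (@weierstrass K (('X - a%:P) * p) (d + 1)).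
Local Notation W := (@weierstrass K p d).

Lemma part2_gen (q : 'rV[K]_d) n :
  periodic_point W q n -> attracting (jacobi (iter n W) q) ->
  (forall k, (k < n)%N -> (forall j, iter k W q 0 j != a) /\ `|@lam K p d a q k| < 1) ->
  periodic_point Wt (row_mx q (const_mx a)) n /\
  attracting (jacobi (iter n Wt) (row_mx q (const_mx a))).
Proof.
move=> [n0 od qn ne] att H.
have H' : forall k, (k < n)%N -> offDiag (iter k W q) /\ forall j, iter k W q 0 j != a.
  by move=> k Hk; split; [exact: od|exact: (H k Hk).1].
have Hio := @iter_io K p d a q n (fun k Hk => (H k Hk).1).
split.
  split.
  - done.
  - move=> k Hk; rewrite Hio; last exact: ltnW.
    apply: offDiag_io; [exact: od|exact: (H k Hk).1].
  - by rewrite Hio // qn.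
  - move=> k /andP [k0 kn]; rewrite Hio; last exact: ltnW.
    apply/negP => /eqP Eb; have [E _] := eq_row_mx Eb.
    by move: (ne k); rewrite k0 kn E eqxx => /(_ isT).
have [_ _ [c Hc]] := @jac_iter K p d a q n H' n (leqnn n).
move=> e; rewrite Hc => /eig_block [/att //|->].
rewrite normr_prod; apply: prod_lt1 => // i; rewrite normr_ge0 /=.
exact: (H i (ltn_ord i)).2.
Qed.

End P2b.

Lemma bound (K : numFieldType) d (p : {poly K}) (w : 'rV[K]_d) :
  p \is monic -> size p = d.+1 ->
  exists M : K, 0 <= M /\ forall a : K, M < `|a| ->
    (forall j, w 0 j != a) /\ `|1 - p.[a] / \prod_(j < d) (a - w 0 j)| < 1.
Proof.
move=> mp sp.
pose B := \sum_(j < d) `|w 0 j|.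
pose q := \prod_(j < d) ('X - (w 0 j)%:P).
pose r := q - p.
pose C := \sum_(i < d) `|r`_i|.
have B0 : 0 <= B by apply: sumr_ge0.
have C0 : 0 <= C by apply: sumr_ge0.
have Bj : forall j, `|w 0 j| <= B.
  move=> j; rewrite /B (bigD1 j) //= lerDl; exact: sumr_ge0.
have sq : size q = d.+1 by rewrite size_prod_XsubC /index_enum unlock -enumT -cardT card_ord.
have mq : q \is monic by exact: monic_prod_XsubC.
have pd : p`_d = 1 by move: mp; rewrite monicE lead_coefE sp => /eqP.
have qd : q`_d = 1 by move: mq; rewrite monicE lead_coefE sq => /eqP.
have sr : (size r <= d)%N.
  apply/leq_sizeP => i; rewrite leq_eqVlt => /orP [/eqP <-|di].
    by rewrite coefB pd qd subrr.
  by rewrite coefB !nth_default ?subrr // ?sq ?sp.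
exists (2 * B + 1 + C * 2 ^+ d).
split.
  by apply: addr_ge0; [apply: addr_ge0 => //; apply: mulr_ge0|apply: mulr_ge0; rewrite // exprn_ge0].
move=> a Ha.
have e1 : 0 <= C * 2 ^+ d by apply: mulr_ge0; rewrite // exprn_ge0.
have aB : 2 * B < `|a|.
  apply: le_lt_trans Ha; rewrite -addrA lerDl; exact: addr_ge0.
have a1 : 1 <= `|a|.
  apply: ltW; apply: le_lt_trans Ha; rewrite -addrA addrCA lerDl.
  apply: addr_ge0 => //; exact: mulr_ge0.
have aC : C * 2 ^+ d < `|a|.
  apply: le_lt_trans Ha; rewrite lerDr; apply: addr_ge0 => //; exact: mulr_ge0.
have a0 : 0 < `|a| by apply: lt_le_trans a1.
split.
  move=> j; apply/eqP => E; have := Bj j; rewrite E => aB'.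
  have : 2 * B < B by apply: lt_le_trans aB aB'.
  by rewrite mulr_natl mulr2n -subr_lt0 addrK => /lt_le_trans /(_ B0); rewrite ltxx.
set P := \prod_(j < d) (a - w 0 j).
have h2 : (0 : K) < 2 by [].
have ha : forall j, `|a| / 2 <= `|a - w 0 j|.
  move=> j; apply: le_trans (lerB_dist _ _).
  rewrite lerBrDr addrC -lerBrDr.
  have -> : `|a| - `|a| / 2 = `|a| / 2.
    by rewrite {1}(splitr `|a|) addrK.
  rewrite ler_pdivlMr //; apply: le_trans (ltW aB).
  by rewrite mulrC ler_pM2l // Bj.
have hP : (`|a| / 2) ^+ d <= `|P|.
  have pc : forall (x : K) n, \prod_(j < n) x = x ^+ n.
    by move=> x; elim => [|n IH]; rewrite ?big_ord0 ?expr0 // big_ord_recr IH exprSr.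
  rewrite normr_prod -pc; apply: ler_prod => j _.
  by rewrite ha andbT divr_ge0 // ltW.
have hr : `|r.[a]| * `|a| <= C * `|a| ^+ d.
  rewrite (horner_coef_wide a sr) /C mulr_suml.
  apply: le_trans; first by apply: ler_wpM2r; [exact: ltW|exact: ler_norm_sum].
  rewrite mulr_suml; apply: ler_sum => i _.
  rewrite normrM normrX -mulrA ler_wpM2l //.
  rewrite -exprSr; apply: ler_weXn2l => //.
have key : C * `|a| ^+ d < `|a| * (`|a| / 2) ^+ d.
  rewrite exprMn exprVn mulrA.
  have -> : C * `|a| ^+ d = C * 2 ^+ d * (`|a| ^+ d / 2 ^+ d).
    by field; rewrite expf_neq0 // pnatr_eq0.
  rewrite -[X in _ < X]mulrA ltr_pM2r //.
  by rewrite divr_gt0 // exprn_gt0.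
have lt1 : `|r.[a]| < `|P|.
  rewrite -(ltr_pM2r a0); apply: le_lt_trans hr _.
  apply: lt_le_trans key _; rewrite mulrC ler_pM2r //.
have P0 : P != 0.
  rewrite -normr_gt0; apply: lt_le_trans hP; apply: exprn_gt0; exact: divr_gt0.
have Er : 1 - p.[a] / P = r.[a] / P.
  rewrite /r hornerD hornerN /q horner_prod.
  under eq_bigr do rewrite hornerXsubC.
  by rewrite mulrBl divff.
rewrite Er normrM normfV ltr_pdivrMr ?mul1r //.
by rewrite normr_gt0.
Qed.

Lemma combine (K : numDomainType) n (Q : nat -> K -> Prop) :
  (forall k, (k < n)%N -> exists M : K, 0 <= M /\ forall a : K, M < `|a| -> Q k a) ->
  exists M : K, 0 <= M /\ forall a : K, M < `|a| -> forall k, (k < n)%N -> Q k a.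
Proof.
elim: n => [|n IH] H.
  by exists 0; split => // a _ k.
have [M1 [M10 HM1]] := IH (fun k Hk => H k (ltnW Hk)).
have [M2 [M20 HM2]] := H n (ltnSn n).
exists (M1 + M2); split; first exact: addr_ge0.
move=> a Ha k; rewrite ltnS leq_eqVlt => /orP [/eqP ->|Hk].
  by apply: HM2; apply: le_lt_trans Ha; rewrite lerDr.
by apply: HM1 => //; apply: le_lt_trans Ha; rewrite lerDl.
Qed.

Theorem lemma3p6 (R : realType) (d : nat) (p : {poly R[i]}) :
  p \is monic -> size p = d.+1 ->
  (* (1) block form of the Jacobi matrix of W_{(Z - alpha) p} *)
  (forall (z : 'rV[R[i]]_d) (alpha : R[i]),
     offDiag (row_mx z (const_mx alpha : 'rV_1)) ->
     exists c : 'cV[R[i]]_d,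
       jacobi (weierstrass (d := (d + 1)%N) (('X - alpha%:P) * p))
              (row_mx z (const_mx alpha))
       = block_mx (jacobi (weierstrass (d := d) p) z) c 0
           (const_mx (1 - p.[alpha] / \prod_(j < d) (alpha - z 0 j)))) /\
  (* (2) attracting cycles persist for |alpha| large *)
  (forall (q : 'rV[R[i]]_d) (n : nat),
     periodic_point (weierstrass (d := d) p) q n ->
     attracting (jacobi (iter n (weierstrass (d := d) p)) q) ->
     exists M : R, forall alpha : R[i], M%:C < `|alpha| ->
       periodic_point (weierstrass (d := (d + 1)%N) (('X - alpha%:P) * p))
                      (row_mx q (const_mx alpha)) n /\
       attracting (jacobi (iter n (weierstrass (d := (d + 1)%N) (('X - alpha%:P) * p)))
                          (row_mx q (const_mx alpha)))).
Proof.
move=> mp sp; split.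
  by move=> z alpha oD; exact: (@part1 _ p d alpha z oD).
move=> q n pp att.
have [M [M0 HM]] := @combine _ n
  (fun k a => (forall j, iter k (@weierstrass _ p d) q 0 j != a) /\
     `|1 - p.[a] / \prod_(j < d) (a - iter k (@weierstrass _ p d) q 0 j)| < 1)
  (fun k _ => @bound _ d p (iter k (@weierstrass _ p d) q) mp sp).
exists (complex.Re M) => alpha Ha.
have EM : (complex.Re M)%:C = M by apply: RRe_real; exact: ger0_real.
rewrite EM in Ha.
apply: (@part2_gen _ p d alpha q n pp att) => k Hk.
exact: (HM alpha Ha k Hk).
Qed.
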